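(* Let $\delta\in\mathbb{C}\setminus\{0\}$ with $\mathrm{Re}(\delta)\ge0$, and let $r\in\mathbb{Z}_{\ge1}$. Then $$P^{\lfloor \mathrm{Re}(\delta)\rfloor+1}\big[X^{\delta}q_r(\alpha)\big](X)\longrightarrow 0\quad\text{classically as } X\to\infty .$$
   Context: For $X>0$ write $X=k+\alpha$ with $k=\lfloor X\rfloor$, $\alpha=X-\lfloor X\rfloor\in[0,1)$; $X^\delta$ is the principal power. $P[f](X)=\frac1X\int_0^X f(x)\,dx$ for locally integrable $f$ on $(0,\infty)$. The polynomials $q_n$ are defined by $q_1(\alpha)=\alpha-\tfrac12$ and, for $n\ge1$, $q_{n+1}$ is the unique polynomial with $q_{n+1}'=q_n$ and $\int_0^1 q_{n+1}(\alpha)\,d\alpha=0$ (e.g. $q_2(\alpha)=\tfrac12\alpha^2-\tfrac12\alpha+\tfrac1{12}$); $q_r(\alpha)$ is regarded as a period-1 function of $X$. *)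

(* Defs.v *)
From Stdlib Require Import Reals.
From Coquelicot Require Import Coquelicot.
Open Scope R_scope.

(* Principal power X^delta = exp(delta * ln X) for X > 0, written out:
   exp((a + i b) ln X) = X^a (cos(b ln X) + i sin(b ln X)). *)
Definition cpow (X : R) (delta : C) : C :=
  (exp (Re delta * ln X) * cos (Im delta * ln X),
   exp (Re delta * ln X) * sin (Im delta * ln X)).

Fixpoint q (n : nat) : R -> R :=
  match n with
  | O => fun _ => 0
  | S O => fun a => a - / 2
  | S m => fun a =>
      RInt (q m) 0 a - RInt (fun t => RInt (q m) 0 t) 0 1
  end.

Definition Pavg (f : R -> C) : R -> C :=
  fun X => Cmult (RtoC (/ X)) (RInt (V := C_R_CompleteNormedModule) f 0 X).

Definition fdq (delta : C) (r : nat) : R -> C :=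
  fun X => Cmult (cpow X delta) (RtoC (q r (frac_part X))).

(* Main.v *)
Require Import Defs.
From Stdlib Require Import Reals RList RiemannInt_SF RiemannInt Lra Lia ZArith.
From Coquelicot Require Import Coquelicot.
Open Scope R_scope.

Definition Approx (f:R->R) (a b e:R) : Type :=
    { phi:StepFun a b &
      { psi:StepFun a b |
        (forall t:R,
          Rmin a b <= t <= Rmax a b -> Rabs (f t - phi t) <= psi t) /\
        Rabs (RiemannInt_SF psi) < e } }.
Lemma approx_glue :
  forall (f:R -> R) (a b c e1 e2:R),
    a <= b ->
    b <= c ->
    Approx f a b e1 ->
    Approx f b c e2 -> Approx f a c (e1 + e2).
Proof.
  unfold Approx; intros f a b c e1 e2 Hyp1 Hyp2 X X0.
  destruct X as [phi1 [psi1 H1]]; destruct X0 as [phi2 [psi2 H2]].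
  assert (H : True) by trivial.
  set
    (phi3 :=
       fun x:R =>
         match Rle_dec a x with
         | left _ =>
             match Rle_dec x b with
             | left _ => phi1 x
             | right _ => phi2 x
             end
         | right _ => 0
         end).
  set
    (psi3 :=
       fun x:R =>
         match Rle_dec a x with
         | left _ =>
             match Rle_dec x b with
             | left _ => psi1 x
             | right _ => psi2 x
             end
         | right _ => 0
         end).
  cut (IsStepFun phi3 a c).
  1:intro; cut (IsStepFun psi3 a b).
  1:intro; cut (IsStepFun psi3 b c).
  1:intro; assert (IsStepFun psi3 a c) by (apply StepFun_P46 with b; assumption).
  - split with (mkStepFun X); split with (mkStepFun X2); simpl;
      split.
    + intros; unfold phi3, psi3; case (Rle_dec t b) as [|Hnle]; case (Rle_dec a t) as [|Hnle'].
      * elim H1; intros; apply H3.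
        replace (Rmin a b) with a.
        { replace (Rmax a b) with b.
          { split; assumption. }
          unfold Rmax; decide (Rle_dec a b) with Hyp1; reflexivity. }
        unfold Rmin; decide (Rle_dec a b) with Hyp1; reflexivity.
      * elim Hnle'; replace a with (Rmin a c).
        { elim H0; intros; assumption. }
        unfold Rmin; case (Rle_dec a c) as [|[]];
          [ reflexivity | apply Rle_trans with b; assumption ].
      * elim H2; intros; apply H3.
        replace (Rmax b c) with (Rmax a c).
        { elim H0; intros; split; try assumption.
          replace (Rmin b c) with b.
          { auto with real. }
          unfold Rmin; decide (Rle_dec b c) with Hyp2; reflexivity. }
        unfold Rmax; decide (Rle_dec b c) with Hyp2; case (Rle_dec a c) as [|[]];
          [ reflexivity | apply Rle_trans with b; assumption ].
      * elim Hnle'; replace a with (Rmin a c).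
        { elim H0; intros; assumption. }
        unfold Rmin; case (Rle_dec a c) as [|[]];
          [ reflexivity | apply Rle_trans with b; assumption ].
    + rewrite <- (StepFun_P43 X0 X1 X2).
      apply Rle_lt_trans with
        (Rabs (RiemannInt_SF (mkStepFun X0)) + Rabs (RiemannInt_SF (mkStepFun X1))).
      { apply Rabs_triang. }
      replace (RiemannInt_SF (mkStepFun X0)) with (RiemannInt_SF psi1).
      { replace (RiemannInt_SF (mkStepFun X1)) with (RiemannInt_SF psi2).
        { apply Rplus_lt_compat.
          { elim H1; intros; assumption. }
          elim H2; intros; assumption. }
        apply Rle_antisym.
        { apply StepFun_P37; try assumption.
          simpl; intros; unfold psi3; elim H0; clear H0; intros;
            destruct (Rle_dec a x) as [Hle|Hnle]; destruct (Rle_dec x b) as [Hle'|Hnle'];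
            [ elim (Rlt_irrefl _ (Rle_lt_trans _ _ _ Hle' H0))
            | right; reflexivity
            | elim Hnle; apply Rle_trans with b; [ assumption | left; assumption ]
            | elim Hnle; apply Rle_trans with b; [ assumption | left; assumption ] ]. }
        apply StepFun_P37; try assumption.
        simpl; intros; unfold psi3; elim H0; clear H0; intros;
          destruct (Rle_dec a x) as [Hle|Hnle]; destruct (Rle_dec x b) as [Hle'|Hnle'];
          [ elim (Rlt_irrefl _ (Rle_lt_trans _ _ _ Hle' H0))
          | right; reflexivity
          | elim Hnle; apply Rle_trans with b; [ assumption | left; assumption ]
          | elim Hnle; apply Rle_trans with b; [ assumption | left; assumption ] ]. }
      apply Rle_antisym.
      { apply StepFun_P37; try assumption.
        simpl; intros; unfold psi3; elim H0; clear H0; intros;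
          destruct (Rle_dec a x) as [Hle|Hnle]; destruct (Rle_dec x b) as [Hle'|Hnle'];
          [ right; reflexivity
          | elim Hnle'; left; assumption
          | elim Hnle; left; assumption
          | elim Hnle; left; assumption ]. }
      apply StepFun_P37; try assumption.
      simpl; intros; unfold psi3; elim H0; clear H0; intros;
        destruct (Rle_dec a x) as [Hle|Hnle]; destruct (Rle_dec x b) as [Hle'|Hnle'];
        [ right; reflexivity
        | elim Hnle'; left; assumption
        | elim Hnle; left; assumption
        | elim Hnle; left; assumption ].
  - assert (H3 := pre psi2); unfold IsStepFun in H3; unfold is_subdivision in H3;
      elim H3; clear H3; intros l1 [lf1 H3]; split with l1;
      split with lf1; unfold adapted_couple in H3; decompose [and] H3;
      clear H3; unfold adapted_couple; repeat split;
      try assumption.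
    intros; assert (H9 := H8 i H3); unfold constant_D_eq, open_interval;
      unfold constant_D_eq, open_interval in H9; intros;
      rewrite <- (H9 x H7); unfold psi3; assert (H10 : b < x).
    { apply Rle_lt_trans with (pos_Rl l1 i).
      { replace b with (Rmin b c).
        { rewrite <- H5; elim (RList_P6 l1); intros; apply H10; try assumption.
          { apply Nat.le_0_l. }
          apply Nat.lt_trans with (pred (length l1)); try assumption; apply Nat.lt_pred_l;
            red; intro; rewrite H12 in H6; discriminate. }
        unfold Rmin; decide (Rle_dec b c) with Hyp2;
          reflexivity. }
      elim H7; intros; assumption. }
    destruct (Rle_dec a x) as [Hle|Hnle]; destruct (Rle_dec x b) as [Hle'|Hnle'];
      [ elim (Rlt_irrefl _ (Rle_lt_trans _ _ _ Hle' H10))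
      | reflexivity
      | elim Hnle; apply Rle_trans with b; [ assumption | left; assumption ]
      | elim Hnle; apply Rle_trans with b; [ assumption | left; assumption ] ].
  - assert (H3 := pre psi1); unfold IsStepFun in H3; unfold is_subdivision in H3;
      elim H3; clear H3; intros l1 [lf1 H3]; split with l1;
      split with lf1; unfold adapted_couple in H3; decompose [and] H3;
      clear H3; unfold adapted_couple; repeat split;
      try assumption.
    intros; assert (H9 := H8 i H3); unfold constant_D_eq, open_interval;
      unfold constant_D_eq, open_interval in H9; intros;
      rewrite <- (H9 x H7); unfold psi3; assert (H10 : x <= b).
    { apply Rle_trans with (pos_Rl l1 (S i)).
      { elim H7; intros; left; assumption. }
      replace b with (Rmax a b).
      { rewrite <- H4; elim (RList_P6 l1); intros; apply H10; try assumption.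
        apply Nat.lt_pred_l; red; intro; rewrite H12 in H6; discriminate. }
      unfold Rmax; decide (Rle_dec a b) with Hyp1; reflexivity. }
    assert (H11 : a <= x).
    { apply Rle_trans with (pos_Rl l1 i).
      { replace a with (Rmin a b).
        { rewrite <- H5; elim (RList_P6 l1); intros; apply H11; try assumption.
          { apply Nat.le_0_l. }
          apply Nat.lt_trans with (pred (length l1)); try assumption; apply Nat.lt_pred_l;
            red; intro; rewrite H13 in H6; discriminate. }
        unfold Rmin; decide (Rle_dec a b) with Hyp1; reflexivity. }
      left; elim H7; intros; assumption. }
    decide (Rle_dec a x) with H11; decide (Rle_dec x b) with H10; reflexivity.
  - apply StepFun_P46 with b.
    { assert (H3 := pre phi1); unfold IsStepFun in H3; unfold is_subdivision in H3;
        elim H3; clear H3; intros l1 [lf1 H3]; split with l1;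
        split with lf1; unfold adapted_couple in H3; decompose [and] H3;
        clear H3; unfold adapted_couple; repeat split;
        try assumption.
      intros; assert (H9 := H8 i H3); unfold constant_D_eq, open_interval;
        unfold constant_D_eq, open_interval in H9; intros;
        rewrite <- (H9 x H7); unfold psi3; assert (H10 : x <= b).
      { apply Rle_trans with (pos_Rl l1 (S i)).
        { elim H7; intros; left; assumption. }
        replace b with (Rmax a b).
        { rewrite <- H4; elim (RList_P6 l1); intros; apply H10; try assumption.
          apply Nat.lt_pred_l; red; intro; rewrite H12 in H6; discriminate. }
        unfold Rmax; decide (Rle_dec a b) with Hyp1; reflexivity. }
      assert (H11 : a <= x).
      { apply Rle_trans with (pos_Rl l1 i).
        { replace a with (Rmin a b).
          { rewrite <- H5; elim (RList_P6 l1); intros; apply H11; try assumption.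
            { apply Nat.le_0_l. }
            apply Nat.lt_trans with (pred (length l1)); try assumption; apply Nat.lt_pred_l;
              red; intro; rewrite H13 in H6; discriminate. }
          unfold Rmin; decide (Rle_dec a b) with Hyp1; reflexivity. }
        left; elim H7; intros; assumption. }
      unfold phi3; decide (Rle_dec a x) with H11; decide (Rle_dec x b) with H10;
        reflexivity || elim n; assumption. }
    assert (H3 := pre phi2); unfold IsStepFun in H3; unfold is_subdivision in H3;
      elim H3; clear H3; intros l1 [lf1 H3]; split with l1;
      split with lf1; unfold adapted_couple in H3; decompose [and] H3;
      clear H3; unfold adapted_couple; repeat split;
      try assumption.
    intros; assert (H9 := H8 i H3); unfold constant_D_eq, open_interval;
      unfold constant_D_eq, open_interval in H9; intros;
      rewrite <- (H9 x H7); unfold psi3; assert (H10 : b < x).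
    { apply Rle_lt_trans with (pos_Rl l1 i).
      { replace b with (Rmin b c).
        { rewrite <- H5; elim (RList_P6 l1); intros; apply H10; try assumption.
          { apply Nat.le_0_l. }
          apply Nat.lt_trans with (pred (length l1)); try assumption; apply Nat.lt_pred_l;
            red; intro; rewrite H12 in H6; discriminate. }
        unfold Rmin; decide (Rle_dec b c) with Hyp2; reflexivity. }
      elim H7; intros; assumption. }
    unfold phi3; destruct (Rle_dec a x) as [Hle|Hnle]; destruct (Rle_dec x b) as [Hle'|Hnle']; intros;
      [ elim (Rlt_irrefl _ (Rle_lt_trans _ _ _ Hle' H10))
      | reflexivity
      | elim Hnle; apply Rle_trans with b; [ assumption | left; assumption ]
      | elim Hnle; apply Rle_trans with b; [ assumption | left; assumption ] ].
Qed.


Lemma approx_weaken f a b e e' : e <= e' -> Approx f a b e -> Approx f a b e'.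
Proof.
  intros He [phi [psi [H1 H2]]]. exists phi, psi. split; [exact H1|lra].
Qed.

Lemma L0 (f : R -> R) (X M : R) : 0 < X ->
  (forall x, 0 <= x <= X -> Rabs (f x) <= M) ->
  (forall e, 0 < e < X -> ex_RInt f e X) -> ex_RInt f 0 X.
Proof.
  intros HX HM Hi. apply ex_RInt_Reals_1. intro eps.
  set (M' := Rabs M + 1).
  assert (HM' : 0 < M') by (unfold M'; pose proof (Rabs_pos M); lra).
  set (eta := Rmin (X/2) (eps/(4*M'))).
  assert (He1 : 0 < eta).
  { unfold eta. apply Rmin_glb_lt. lra. apply Rdiv_lt_0_compat. apply cond_pos. lra. }
  assert (He2 : eta < X).
  { unfold eta. eapply Rle_lt_trans. apply Rmin_l. lra. }
  assert (He3 : eta <= eps/(4*M')) by apply Rmin_r.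
  assert (A1 : Approx f 0 eta (eps/2)).
  { exists (mkStepFun (StepFun_P4 0 eta 0)), (mkStepFun (StepFun_P4 0 eta M')).
    split.
    - intros t Ht. simpl. unfold fct_cte. rewrite Rmin_left in Ht by lra.
      rewrite Rmax_right in Ht by lra. rewrite Rminus_0_r.
      eapply Rle_trans. apply HM. lra. unfold M'. pose proof (Rle_abs M). lra.
    - rewrite StepFun_P18. rewrite Rabs_right.
      + replace (M' * (eta - 0)) with (M' * eta) by ring.
        apply Rle_lt_trans with (M' * (eps / (4 * M'))).
        apply Rmult_le_compat_l; lra.
        replace (M' * (eps / (4 * M'))) with (eps / 4) by (field; lra).
        pose proof (cond_pos eps). lra.
      + apply Rle_ge. apply Rmult_le_pos; lra. }
  assert (A2 : Approx f eta X (eps/2)).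
  { assert (Hr := ex_RInt_Reals_0 f eta X (Hi eta (conj He1 He2))).
    assert (Hp : 0 < eps/2) by (pose proof (cond_pos eps); lra).
    exact (Hr (mkposreal _ Hp)). }
  pose proof (approx_glue f 0 eta X (eps/2) (eps/2) (Rlt_le _ _ He1) (Rlt_le _ _ He2) A1 A2) as A.
  apply (approx_weaken f 0 X _ eps) in A; [exact A | lra].
Qed.


Lemma q_SS m : q (S (S m)) =
  fun a => RInt (q (S m)) 0 a - RInt (fun t => RInt (q (S m)) 0 t) 0 1.
Proof. reflexivity. Qed.

Lemma q_cont n : forall x, continuous (q n) x.
Proof.
  destruct n as [|n]. { intros x. simpl. apply continuous_const. }
  induction n as [|n IH].
  - intros x. simpl. apply (continuous_minus (fun y => y) (fun _ => /2)).
    apply continuous_id. apply continuous_const.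
  - intros x. rewrite q_SS.
    apply (continuous_minus (fun a => RInt (q (S n)) 0 a)).
    2: apply continuous_const.
    apply ex_derive_continuous. exists (q (S n) x).
    apply (is_derive_RInt (q (S n)) (RInt (q (S n)) 0) 0 x).
    + apply filter_forall. intros y. apply (@RInt_correct R_CompleteNormedModule).
      apply (@ex_RInt_continuous R_CompleteNormedModule). intros z _. apply IH.
    + apply IH.
Qed.

Lemma q_ex_RInt n a b : ex_RInt (q n) a b.
Proof. apply (@ex_RInt_continuous R_CompleteNormedModule). intros z _. apply q_cont. Qed.

Lemma q_deriv n x : (1 <= n)%nat -> is_derive (q (S n)) x (q n x).
Proof.
  intros Hn. destruct n as [|n]; [lia|]. rewrite q_SS.
  replace (q (S n) x) with (minus (q (S n) x) 0).
  apply (is_derive_minus (fun a => RInt (q (S n)) 0 a)).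
  - apply (is_derive_RInt (q (S n)) (RInt (q (S n)) 0) 0 x).
    + apply filter_forall. intros y. apply (@RInt_correct R_CompleteNormedModule). apply q_ex_RInt.
    + apply q_cont.
  - apply (@is_derive_const R_AbsRing R_NormedModule).
  - unfold minus, plus, opp; simpl. ring.
Qed.

Lemma q_mean n : (1 <= n)%nat -> RInt (q n) 0 1 = 0.
Proof.
  intros Hn. destruct n as [|n]; [lia|]. destruct n as [|n].
  - simpl. apply is_RInt_unique.
    assert (H : is_RInt (fun t => t - /2) 0 1
      (minus ((fun t => t*t/2 - t/2) 1) ((fun t => t*t/2 - t/2) 0))).
    { apply (@is_RInt_derive R_CompleteNormedModule (fun t => t*t/2 - t/2)).
    + intros x _. auto_derive; auto. field.
    + intros x _. apply (continuous_minus (fun y => y) (fun _ => /2)).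
      apply continuous_id. apply continuous_const. }
    cbv beta in H.
    assert (E : minus (1*1/2 - 1/2) (0*0/2 - 0/2) = 0) by (unfold minus, plus, opp; simpl; field).
    rewrite E in H. exact H.
  - rewrite q_SS.
    rewrite (RInt_minus (fun a => RInt (q (S n)) 0 a) (fun _ => RInt (fun t => RInt (q (S n)) 0 t) 0 1)).
    + rewrite RInt_const. unfold minus, plus, opp, scal; simpl. unfold mult; simpl. ring.
    + apply (@ex_RInt_continuous R_CompleteNormedModule). intros z _. apply (@ex_derive_continuous R_AbsRing R_NormedModule).
      exists (q (S n) z). apply (is_derive_RInt (q (S n)) (RInt (q (S n)) 0) 0 z).
      apply filter_forall. intros y. apply (@RInt_correct R_CompleteNormedModule). apply q_ex_RInt. apply q_cont.
    + apply ex_RInt_const.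
Qed.

Lemma q_per n : (1 <= n)%nat -> q (S n) 1 = q (S n) 0.
Proof.
  intros Hn. destruct n as [|n]; [lia|]. rewrite q_SS. cbv beta.
  rewrite RInt_point. rewrite (q_mean (S n) Hn). reflexivity.
Qed.

Lemma q_bound n : exists M, forall x, 0 <= x <= 1 -> Rabs (q n x) <= M.
Proof.
  destruct (continuity_ab_maj (fun x => Rabs (q n x)) 0 1) as [y [Hy _]].
  lra. intros c _. apply continuity_pt_filterlim. apply continuous_comp.
  apply q_cont. apply continuous_Rabs.
  exists (Rabs (q n y)). intros x Hx. apply Hy. exact Hx.
Qed.


Definition PR (g : R -> R) : R -> R := fun X => / X * RInt g 0 X.
Definition W (g : R -> R) : Prop :=
  (forall X, 0 <= X -> ex_RInt g 0 X) /\
  (forall X, 0 <= X -> exists M, forall x, 0 <= x <= X -> Rabs (g x) <= M).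
Definition T0 (g : R -> R) : Prop :=
  forall eps, 0 < eps -> exists A, forall x, A <= x -> Rabs (g x) < eps.

Lemma W_sub g a b : W g -> 0 <= a <= b -> ex_RInt g a b.
Proof.
  intros [Hi _] Hab. apply (@ex_RInt_Chasles_2 R_CompleteNormedModule g 0 a b). lra.
  apply Hi. lra.
Qed.

Lemma RInt_cont0 g z : W g -> 0 < z -> continuity_pt (RInt g 0) z.
Proof.
  intros Hg Hz. destruct Hg as [Hi Hb].
  destruct (Hb (2*z)) as [M HM]. lra.
  intros eps Heps. exists (Rmin (z/2) (eps / (Rabs M + 1))). split.
  { apply Rmin_glb_lt. lra. apply Rdiv_lt_0_compat. lra. pose proof (Rabs_pos M); lra. }
  intros y [_ Hy]. simpl in *. unfold R_dist in *.
  assert (Hd1 : Rabs (y - z) < z/2) by (eapply Rlt_le_trans; [exact Hy|apply Rmin_l]).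
  assert (Hd2 : Rabs (y - z) < eps / (Rabs M + 1)) by (eapply Rlt_le_trans; [exact Hy|apply Rmin_r]).
  assert (HM1 : 0 < Rabs M + 1) by (pose proof (Rabs_pos M); lra).
  assert (Hyz := Rabs_def2 _ _ Hd1).
  assert (HM' : forall x, 0 <= x <= 2*z -> Rabs (g x) <= Rabs M + 1).
  { intros x Hx. eapply Rle_trans. apply HM; lra. pose proof (Rle_abs M); lra. }
  assert (Hl : Rabs (y - z) * (Rabs M + 1) < eps).
  { apply (Rmult_lt_compat_r (Rabs M + 1)) in Hd2; [|lra].
    replace (eps / (Rabs M + 1) * (Rabs M + 1)) with eps in Hd2 by (field; lra). exact Hd2. }
  destruct (Rle_lt_dec z y) as [Hzy|Hzy].
  - rewrite <- (RInt_Chasles g 0 z y). 2: apply Hi; lra.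
    2: apply (W_sub g z y); [split; assumption|lra].
    change (plus (RInt g 0 z) (RInt g z y)) with (RInt g 0 z + RInt g z y).
    rewrite (fun u v : R => (Rplus_minus_l u v : u + v - u = v)).
    eapply Rle_lt_trans. apply (abs_RInt_le_const g z y (Rabs M + 1)). lra.
    apply (W_sub g z y); [split; assumption|lra].
    intros t Ht. apply HM'. lra.
    rewrite Rabs_right in Hl by lra. lra.
  - rewrite <- (RInt_Chasles g 0 y z). 2: apply Hi; lra.
    2: apply (W_sub g y z); [split; assumption|lra].
    change (plus (RInt g 0 y) (RInt g y z)) with (RInt g 0 y + RInt g y z).
    rewrite (fun u v : R => (ltac:(intros; ring) : u - (u + v) = - v)).
    rewrite Rabs_Ropp.
    eapply Rle_lt_trans. apply (abs_RInt_le_const g y z (Rabs M + 1)). lra.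
    apply (W_sub g y z); [split; assumption|lra].
    intros t Ht. apply HM'. lra.
    rewrite Rabs_left in Hl by lra. lra.
Qed.

Lemma PR_cont g z : W g -> 0 < z -> continuous (PR g) z.
Proof.
  intros Hg Hz. unfold PR.
  apply (continuous_mult (fun X => / X) (RInt g 0)).
  apply continuous_Rinv. lra.
  apply continuity_pt_filterlim. apply RInt_cont0; auto.
Qed.

Lemma W_PR g : W g -> W (PR g).
Proof.
  intros Hg. split.
  - intros X HX. destruct (Rle_lt_or_eq_dec 0 X HX) as [HX'|HX'].
    2: { subst X. apply ex_RInt_point. }
    destruct Hg as [Hi Hb]. destruct (Hb X HX) as [M HM].
    apply (L0 _ X (Rabs M)). exact HX'.
    + intros x Hx. unfold PR. destruct (Rle_lt_or_eq_dec 0 x (proj1 Hx)) as [Hx0|Hx0].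
      * rewrite Rabs_mult. rewrite Rabs_Rinv by lra. rewrite (Rabs_right x) by lra.
        apply (Rmult_le_reg_l x). lra. rewrite <- Rmult_assoc, Rinv_r, Rmult_1_l by lra.
        eapply Rle_trans. apply abs_RInt_le_const. lra. apply Hi. lra.
        intros t Ht. eapply Rle_trans. apply HM. lra. apply Rle_abs. lra.
      * subst x. rewrite RInt_point. unfold zero; simpl. rewrite Rmult_0_r, Rabs_R0. apply Rabs_pos.
    + intros e He. apply (@ex_RInt_continuous R_CompleteNormedModule).
      intros z Hz. rewrite Rmin_left in Hz by lra. apply PR_cont; auto. split; auto. lra.
  - intros X HX. destruct Hg as [Hi Hb]. destruct (Hb X HX) as [M HM].
    exists (Rabs M). intros x Hx. unfold PR. destruct (Rle_lt_or_eq_dec 0 x (proj1 Hx)) as [Hx0|Hx0].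
      * rewrite Rabs_mult. rewrite Rabs_Rinv by lra. rewrite (Rabs_right x) by lra.
        apply (Rmult_le_reg_l x). lra. rewrite <- Rmult_assoc, Rinv_r, Rmult_1_l by lra.
        eapply Rle_trans. apply abs_RInt_le_const. lra. apply Hi. lra.
        intros t Ht. eapply Rle_trans. apply HM. lra. apply Rle_abs. lra.
      * subst x. rewrite RInt_point. unfold zero; simpl. rewrite Rmult_0_r, Rabs_R0. apply Rabs_pos.
Qed.


Lemma PR_ext g h X : 0 <= X -> (forall x, 0 <= x <= X -> g x = h x) -> PR g X = PR h X.
Proof.
  intros HX H. unfold PR. f_equal. apply RInt_ext. intros x Hx.
  rewrite Rmin_left in Hx by lra. rewrite Rmax_right in Hx by lra. apply H. lra.
Qed.

Lemma iter_ext n g h : (forall x, 0 <= x -> g x = h x) ->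
  forall X, 0 <= X -> Nat.iter n PR g X = Nat.iter n PR h X.
Proof.
  intros H. induction n as [|n IH]; intros X HX; simpl. apply H; auto.
  apply PR_ext; auto. intros x Hx. apply IH. lra.
Qed.

Lemma W_iter n g : W g -> W (Nat.iter n PR g).
Proof. intros H. induction n; simpl; auto. apply W_PR; auto. Qed.

Lemma W_lin g h c : W g -> W h -> W (fun x => g x + c * h x).
Proof.
  intros [Hg1 Hg2] [Hh1 Hh2]. split.
  - intros X HX. apply (@ex_RInt_plus R_NormedModule g (fun x => scal c (h x))).
    auto. apply (@ex_RInt_scal R_NormedModule). auto.
  - intros X HX. destruct (Hg2 X HX) as [M1 H1]. destruct (Hh2 X HX) as [M2 H2].
    exists (M1 + Rabs c * M2). intros x Hx.
    eapply Rle_trans. apply Rabs_triang. rewrite Rabs_mult.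
    apply Rplus_le_compat. auto. apply Rmult_le_compat_l. apply Rabs_pos. auto.
Qed.

Lemma PR_lin g h c X : W g -> W h -> 0 <= X ->
  PR (fun x => g x + c * h x) X = PR g X + c * PR h X.
Proof.
  intros [Hg1 _] [Hh1 _] HX. unfold PR.
  transitivity (/ X * RInt (fun x => plus (g x) (scal c (h x))) 0 X). reflexivity.
  rewrite (@RInt_plus R_CompleteNormedModule). rewrite (@RInt_scal R_CompleteNormedModule).
  change (plus (RInt g 0 X) (scal c (RInt h 0 X))) with (RInt g 0 X + c * RInt h 0 X). ring.
  auto. auto. apply (@ex_RInt_scal R_NormedModule). auto.
Qed.

Lemma iter_lin n g h c : W g -> W h -> forall X, 0 <= X ->
  Nat.iter n PR (fun x => g x + c * h x) X = Nat.iter n PR g X + c * Nat.iter n PR h X.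
Proof.
  intros Hg Hh. induction n as [|n IH]; intros X HX; simpl. reflexivity.
  rewrite (PR_ext _ (fun x => Nat.iter n PR g x + c * Nat.iter n PR h x)); auto.
  apply PR_lin; auto; apply W_iter; auto.
  intros x Hx. apply IH. lra.
Qed.

Lemma iter_S' n g : Nat.iter (S n) PR g = Nat.iter n PR (PR g).
Proof. induction n; simpl in *; auto. rewrite <- IHn. reflexivity. Qed.

Lemma T0_lin g h c : T0 g -> T0 h -> T0 (fun x => g x + c * h x).
Proof.
  intros Hg Hh eps Heps.
  destruct (Hg (eps/2)) as [A1 H1]. lra.
  destruct (Hh (eps/2/(Rabs c + 1))) as [A2 H2].
  { apply Rdiv_lt_0_compat. lra. pose proof (Rabs_pos c); lra. }
  exists (Rmax A1 A2). intros x Hx.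
  eapply Rle_lt_trans. apply Rabs_triang. rewrite Rabs_mult.
  assert (E1 := H1 x (Rle_trans _ _ _ (Rmax_l _ _) Hx)).
  assert (E2 := H2 x (Rle_trans _ _ _ (Rmax_r _ _) Hx)).
  assert (Hc : 0 < Rabs c + 1) by (pose proof (Rabs_pos c); lra).
  assert (Rabs c * Rabs (h x) <= (Rabs c + 1) * Rabs (h x)).
  { apply Rmult_le_compat_r. apply Rabs_pos. lra. }
  assert ((Rabs c + 1) * Rabs (h x) < eps / 2).
  { apply (Rmult_lt_compat_l (Rabs c + 1)) in E2; [|lra].
    replace ((Rabs c + 1) * (eps / 2 / (Rabs c + 1))) with (eps/2) in E2 by (field; lra). exact E2. }
  lra.
Qed.

Lemma T0_ext g h A : (forall x, A <= x -> g x = h x) -> T0 g -> T0 h.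
Proof.
  intros E Hg eps Heps. destruct (Hg eps Heps) as [B HB]. exists (Rmax A B).
  intros x Hx. rewrite <- E. apply HB. eapply Rle_trans. apply Rmax_r. exact Hx.
  eapply Rle_trans. apply Rmax_l. exact Hx.
Qed.

Lemma T0_cesaro g : W g -> T0 g -> T0 (PR g).
Proof.
  intros Hg HT eps Heps. destruct (HT (eps/2)) as [A0 HA0]. lra.
  set (A := Rmax A0 1).
  set (K := Rabs (RInt g 0 A)).
  exists (Rmax A (2 * K / eps + 1)). intros X HX.
  assert (HA1 : 1 <= A) by apply Rmax_r.
  assert (HXA : A <= X) by (eapply Rle_trans; [apply Rmax_l|exact HX]).
  assert (HXK : 2 * K / eps + 1 <= X) by (eapply Rle_trans; [apply Rmax_r|exact HX]).
  unfold PR. rewrite <- (RInt_Chasles g 0 A X).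
  2: apply (W_sub g 0 A); auto; lra.
  2: apply (W_sub g A X); auto; lra.
  change (plus (RInt g 0 A) (RInt g A X)) with (RInt g 0 A + RInt g A X).
  assert (HI : Rabs (RInt g A X) <= (X - A) * (eps/2)).
  { apply abs_RInt_le_const. lra. apply (W_sub g A X); auto; lra.
    intros t Ht. left. apply HA0. unfold A in Ht. pose proof (Rmax_l A0 1). lra. }
  rewrite Rabs_mult, Rabs_Rinv by lra. rewrite Rabs_right by lra.
  apply (Rmult_lt_reg_l X). lra. rewrite <- Rmult_assoc, Rinv_r, Rmult_1_l by lra.
  eapply Rle_lt_trans. apply Rabs_triang. fold K.
  assert (HK : K < X * (eps/2)).
  { assert (0 <= K) by apply Rabs_pos.
    assert (2 * K / eps < X) by lra.
    apply (Rmult_lt_compat_r (eps/2)) in H0; [|lra].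
    replace (2 * K / eps * (eps / 2)) with K in H0 by (field; lra). lra. }
  assert ((X - A) * (eps/2) <= X * (eps / 2)).
  { apply Rmult_le_compat_r; lra. }
  lra.
Qed.

Lemma T0_iter n g : W g -> T0 g -> T0 (Nat.iter n PR g).
Proof.
  intros Hg HT. induction n; simpl; auto. apply T0_cesaro; auto. apply W_iter; auto.
Qed.


Definition U (a b th : R) (x : R) : R := exp (a * ln x) * cos (b * ln x + th).
Definition F (a b th : R) (r : nat) (x : R) : R := U a b th x * q r (frac_part x).
Definition E (a b th : R) (r : nat) (x : R) : R :=
  if Rle_dec 1 x then F a b th r x else 0.

Lemma exp_le x y : x <= y -> exp x <= exp y.
Proof. intros H. destruct (Rle_lt_or_eq_dec _ _ H). left; apply exp_increasing; auto. subst; lra. Qed.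

Lemma frac_cell (k : Z) x : IZR k <= x < IZR k + 1 -> frac_part x = x - IZR k.
Proof. intros H. unfold frac_part. rewrite <- (Int_part_spec x k). reflexivity. lra. Qed.

Lemma frac_range x : 0 <= frac_part x <= 1.
Proof. destruct (base_fp x). lra. Qed.

Lemma U_cont a b th x : 0 < x -> continuous (U a b th) x.
Proof.
  intros Hx. apply (@ex_derive_continuous R_AbsRing R_NormedModule).
  unfold U. auto_derive. auto.
Qed.

Lemma wq_cont (w : R -> R) m c x : continuous w x ->
  continuous (fun y => w y * q m (y - c)) x.
Proof.
  intros Hw. apply (continuous_mult w (fun y => q m (y - c))). auto.
  apply (continuous_comp (fun y => y - c) (q m)).
  apply (continuous_minus (fun y => y) (fun _ => c)). apply continuous_id. apply continuous_const.
  apply q_cont.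
Qed.

Lemma F_cell a b th r (k : Z) y X : 0 < y -> IZR k <= y -> y <= X -> X <= IZR k + 1 ->
  ex_RInt (F a b th r) y X.
Proof.
  intros Hy Hky HyX HXk.
  apply (ex_RInt_ext (fun x => U a b th x * q r (x - IZR k))).
  - intros x Hx. rewrite Rmin_left in Hx by lra. rewrite Rmax_right in Hx by lra.
    unfold F. rewrite (frac_cell k x). reflexivity. lra.
  - apply (@ex_RInt_continuous R_CompleteNormedModule). intros z Hz.
    rewrite Rmin_left in Hz by lra. rewrite Rmax_right in Hz by lra.
    apply wq_cont. apply U_cont. lra.
Qed.

Lemma F_int_from_Z a b th r : forall n (k : Z) X, 0 < IZR k -> IZR k <= X <= IZR k + INR n ->
  ex_RInt (F a b th r) (IZR k) X.
Proof.
  induction n as [|n IH]; intros k X Hk HX.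
  - simpl in HX. replace X with (IZR k) by lra. apply ex_RInt_point.
  - destruct (Rle_lt_dec X (IZR k + 1)).
    + apply (F_cell a b th r k); lra.
    + apply (ex_RInt_Chasles _ _ (IZR k + 1)).
      apply (F_cell a b th r k); lra.
      replace (IZR k + 1) with (IZR (k + 1)) by (rewrite plus_IZR; reflexivity).
      apply IH. rewrite plus_IZR; lra. rewrite plus_IZR. rewrite S_INR in HX. lra.
Qed.

Lemma F_int a b th r y X : 0 < y -> y <= X -> ex_RInt (F a b th r) y X.
Proof.
  intros Hy HyX. set (k := Int_part y).
  destruct (base_Int_part y) as [Hk1 Hk2]. fold k in Hk1, Hk2.
  destruct (Rle_lt_dec X (IZR k + 1)).
  - apply (F_cell a b th r k); lra.
  - apply (ex_RInt_Chasles _ _ (IZR k + 1)).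
    apply (F_cell a b th r k); lra.
    destruct (INR_archimed 1 X) as [n Hn]. lra.
    replace (IZR k + 1) with (IZR (k + 1)) by (rewrite plus_IZR; reflexivity).
    apply (F_int_from_Z a b th r n). rewrite plus_IZR; lra.
    rewrite plus_IZR. split. lra. rewrite Rmult_1_r in Hn.
    lra.
Qed.

Lemma U_bound_E a b th x X : 1 <= x <= X -> Rabs (U a b th x) <= exp (Rabs a * Rabs (ln X)).
Proof.
  intros Hx. unfold U. rewrite Rabs_mult. rewrite (Rabs_right (exp _)) by (left; apply exp_pos).
  rewrite <- (Rmult_1_r (exp (Rabs a * Rabs (ln X)))).
  apply Rmult_le_compat. left; apply exp_pos. apply Rabs_pos.
  - apply exp_le. assert (0 <= ln x) by (rewrite <- ln_1; apply ln_le; lra).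
    assert (ln x <= ln X) by (apply ln_le; lra).
    rewrite (Rabs_right (ln X)) by lra.
    eapply Rle_trans. apply Rle_abs. rewrite Rabs_mult. rewrite (Rabs_right (ln x)) by lra.
    apply Rmult_le_compat_l. apply Rabs_pos. lra.
  - apply Rabs_le. apply COS_bound.
Qed.

Lemma ln_0 : ln 0 = 0.
Proof. unfold ln. case Rlt_dec; intros H. exfalso; apply (Rlt_irrefl 0); exact H. reflexivity. Qed.

Lemma U_bound_F a b th x X : 0 <= a -> 0 <= x <= X -> 0 < X ->
  Rabs (U a b th x) <= exp (a * Rabs (ln X)).
Proof.
  intros Ha Hx HX. unfold U. rewrite Rabs_mult. rewrite (Rabs_right (exp _)) by (left; apply exp_pos).
  rewrite <- (Rmult_1_r (exp (a * Rabs (ln X)))).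
  apply Rmult_le_compat. left; apply exp_pos. apply Rabs_pos.
  - apply exp_le. apply Rmult_le_compat_l. auto.
    destruct (Rle_lt_or_eq_dec 0 x (proj1 Hx)) as [H0|H0].
    + eapply Rle_trans. apply ln_le. auto. apply (proj2 Hx). apply Rle_abs.
    + subst x. rewrite ln_0. apply Rabs_pos.
  - apply Rabs_le. apply COS_bound.
Qed.

Lemma q_frac_bound r : exists Mq, 0 <= Mq /\ forall x, Rabs (q r (frac_part x)) <= Mq.
Proof.
  destruct (q_bound r) as [M HM]. exists (Rabs M). split. apply Rabs_pos.
  intros x. eapply Rle_trans. apply HM. apply frac_range. apply Rle_abs.
Qed.

Lemma W_E a b th r : W (E a b th r).
Proof.
  split.
  - intros X HX. destruct (Rle_lt_dec X 1).
    + apply (ex_RInt_ext (fun _ => 0)). intros x Hx. rewrite Rmin_left in Hx by lra.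
      rewrite Rmax_right in Hx by lra. unfold E. destruct (Rle_dec 1 x). lra. reflexivity.
      apply ex_RInt_const.
    + apply (ex_RInt_Chasles _ _ 1).
      * apply (ex_RInt_ext (fun _ => 0)). intros x Hx. rewrite Rmin_left in Hx by lra.
        rewrite Rmax_right in Hx by lra. unfold E. destruct (Rle_dec 1 x). lra. reflexivity.
        apply ex_RInt_const.
      * apply (ex_RInt_ext (F a b th r)). intros x Hx. rewrite Rmin_left in Hx by lra.
        rewrite Rmax_right in Hx by lra. unfold E. destruct (Rle_dec 1 x). reflexivity. lra.
        apply F_int; lra.
  - intros X HX. destruct (q_frac_bound r) as [Mq [HMq HMq']].
    exists (exp (Rabs a * Rabs (ln X)) * Mq). intros x Hx. unfold E.
    destruct (Rle_dec 1 x).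
    + unfold F. rewrite Rabs_mult. apply Rmult_le_compat; try apply Rabs_pos; auto.
      apply U_bound_E. lra.
    + rewrite Rabs_R0. apply Rmult_le_pos. left; apply exp_pos. auto.
Qed.

Lemma W_F a b th r : 0 <= a -> W (F a b th r).
Proof.
  intros Ha. destruct (q_frac_bound r) as [Mq [HMq HMq']].
  assert (Hb : forall X, 0 < X -> forall x, 0 <= x <= X -> Rabs (F a b th r x) <= exp (a * Rabs (ln X)) * Mq).
  { intros X HX x Hx. unfold F. rewrite Rabs_mult. apply Rmult_le_compat; try apply Rabs_pos; auto.
    apply U_bound_F; auto. }
  split.
  - intros X HX. destruct (Rle_lt_or_eq_dec 0 X HX) as [HX'|HX'].
    2: { subst X. apply ex_RInt_point. }
    apply (L0 _ X (exp (a * Rabs (ln X)) * Mq)). auto. apply Hb; auto.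
    intros e He. apply F_int; lra.
  - intros X HX. destruct (Rle_lt_or_eq_dec 0 X HX) as [HX'|HX'].
    + exists (exp (a * Rabs (ln X)) * Mq). apply Hb; auto.
    + subst X. exists (Rabs (F a b th r 0)). intros x Hx. replace x with 0 by lra. lra.
Qed.


Lemma exp_am1 a x : 0 < x -> exp ((a - 1) * ln x) = exp (a * ln x) / x.
Proof.
  intros Hx. replace ((a - 1) * ln x) with (a * ln x + - ln x) by ring.
  rewrite exp_plus, exp_Ropp, exp_ln by auto. reflexivity.
Qed.

Lemma cos_mPI2 w : cos (w - PI/2) = sin w.
Proof. rewrite cos_minus, cos_PI2, sin_PI2. ring. Qed.

Lemma deriv_gen (Qf : R -> R) dQ a b th c x : 0 < x -> is_derive Qf (x - c) dQ ->
  is_derive (fun y => U a b th y * Qf (y - c)) x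
    (U a b th x * dQ + a * (U (a-1) b th x * Qf (x - c))
       - b * (U (a-1) b (th - PI/2) x * Qf (x - c))).
Proof.
  intros Hx HQ. unfold U. auto_derive.
  - repeat split; auto. exists dQ. exact HQ.
  - assert (HQ' : Derive (fun x0 => Qf x0) (x + - c) = dQ) by (apply is_derive_unique; exact HQ).
    rewrite HQ'. replace (x + - c) with (x - c) by ring.
    rewrite !exp_am1 by auto.
    replace (b * ln x + (th - PI / 2)) with ((b * ln x + th) - PI/2) by ring.
    rewrite cos_mPI2. field. lra.
Qed.

Lemma minus_R (u v : R) : minus u v = u - v.
Proof. reflexivity. Qed.
Lemma plus_R (u v : R) : plus u v = u + v.
Proof. reflexivity. Qed.

Definition Hf a b th r x :=
  E a b th r x + a * E (a-1) b th (S r) x - b * E (a-1) b (th - PI/2) (S r) x.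

Lemma frac_Z (k : Z) : frac_part (IZR k) = 0.
Proof. rewrite (frac_cell k). ring. lra. Qed.

Lemma cell a b th r (k : Z) y : (1 <= r)%nat -> 1 <= IZR k -> IZR k <= y <= IZR k + 1 ->
  is_RInt (Hf a b th r) (IZR k) y (F a b th (S r) y - F a b th (S r) (IZR k)).
Proof.
  intros Hr Hk Hy. set (c := IZR k) in *.
  set (dk := fun x => U a b th x * q r (x - c) + a * (U (a-1) b th x * q (S r) (x - c))
       - b * (U (a-1) b (th - PI/2) x * q (S r) (x - c))).
  assert (D : is_RInt dk c y (minus ((fun x => U a b th x * q (S r) (x - c)) y)
                                   ((fun x => U a b th x * q (S r) (x - c)) c))).
  { apply (@is_RInt_derive R_CompleteNormedModule (fun x => U a b th x * q (S r) (x - c)) dk).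
    - intros x Hx. rewrite Rmin_left in Hx by lra. rewrite Rmax_right in Hx by lra.
      apply deriv_gen. unfold c in *; lra. apply q_deriv. auto.
    - intros x Hx. rewrite Rmin_left in Hx by lra. rewrite Rmax_right in Hx by lra.
      assert (Hx0 : 0 < x) by (unfold c in *; lra).
      unfold dk.
      apply (continuous_minus (fun x => U a b th x * q r (x - c) + a * (U (a-1) b th x * q (S r) (x - c)))
               (fun x => b * (U (a-1) b (th - PI/2) x * q (S r) (x - c)))).
      apply (continuous_plus (fun x => U a b th x * q r (x - c)) (fun x => a * (U (a-1) b th x * q (S r) (x - c)))).
      apply wq_cont. apply U_cont; auto.
      apply (continuous_mult (fun _ => a) (fun x => U (a-1) b th x * q (S r) (x - c))).
      apply continuous_const. apply wq_cont. apply U_cont; auto.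
      apply (continuous_mult (fun _ => b) (fun x => U (a-1) b (th - PI/2) x * q (S r) (x - c))).
      apply continuous_const. apply wq_cont. apply U_cont; auto. }
  apply (is_RInt_ext dk).
  { intros x Hx. rewrite Rmin_left in Hx by lra. rewrite Rmax_right in Hx by lra.
    unfold dk, Hf, E. destruct (Rle_dec 1 x) as [_|Hn]; [|exfalso; unfold c in *; lra].
    unfold F. rewrite (frac_cell k x) by (unfold c in *; lra). fold c. reflexivity. }
  replace (F a b th (S r) y - F a b th (S r) c) with
    (minus ((fun x => U a b th x * q (S r) (x - c)) y) ((fun x => U a b th x * q (S r) (x - c)) c)).
  exact D.
  rewrite minus_R. cbv beta. unfold F. unfold c. rewrite frac_Z. fold c.
  replace (c - c) with 0 by ring.
  destruct (Rle_lt_or_eq_dec y (c + 1) (proj2 Hy)) as [Hy1|Hy1].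
  - assert (Hfr : frac_part y = y - c) by (apply frac_cell; unfold c in *; lra). rewrite Hfr. reflexivity.
  - rewrite Hy1. unfold c. replace (IZR k + 1) with (IZR (k + 1)) by (rewrite plus_IZR; reflexivity).
    rewrite frac_Z. rewrite plus_IZR. replace (IZR k + 1 - IZR k) with 1 by ring.
    rewrite q_per by auto. reflexivity.
Qed.

Lemma ibp_Z a b th r : (1 <= r)%nat -> forall n (k : Z) X, 1 <= IZR k -> IZR k <= X <= IZR k + INR n ->
  is_RInt (Hf a b th r) (IZR k) X (F a b th (S r) X - F a b th (S r) (IZR k)).
Proof.
  intros Hr. induction n as [|n IH]; intros k X Hk HX.
  - simpl in HX. replace X with (IZR k) by lra. replace (F a b th (S r) (IZR k) - F a b th (S r) (IZR k)) with (@zero R_NormedModule)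
      by (unfold zero; simpl; ring). apply (@is_RInt_point R_NormedModule).
  - destruct (Rle_lt_dec X (IZR k + 1)).
    + apply cell; auto. lra.
    + assert (Epl : forall u v w : R, @eq R (plus (v - w) (u - v)) (u - w)) by (intros; rewrite plus_R; ring).
      rewrite <- (Epl (F a b th (S r) X) (F a b th (S r) (IZR (k+1))) (F a b th (S r) (IZR k))).
      apply (@is_RInt_Chasles R_NormedModule _ _ (IZR (k+1))).
      * rewrite plus_IZR. apply cell; auto. lra.
      * apply IH. rewrite plus_IZR; lra. rewrite plus_IZR. rewrite S_INR in HX. lra.
Qed.

Lemma ibp a b th r X : (1 <= r)%nat -> 1 <= X ->
  is_RInt (Hf a b th r) 1 X (F a b th (S r) X - F a b th (S r) 1).
Proof.
  intros Hr HX. destruct (INR_archimed 1 X) as [n Hn]. lra.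
  apply (ibp_Z a b th r Hr n 1%Z X). simpl; lra. simpl. rewrite Rmult_1_r in Hn. lra.
Qed.


Lemma RInt_E_small a b th r X : 0 <= X <= 1 -> RInt (E a b th r) 0 X = 0.
Proof.
  intros HX. rewrite (RInt_ext _ (fun _ => 0)). rewrite RInt_const.
  rewrite Rmult_0_r. reflexivity. cbv beta.
  intros x Hx. rewrite Rmin_left in Hx by lra. rewrite Rmax_right in Hx by lra.
  unfold E. destruct (Rle_dec 1 x). lra. reflexivity.
Qed.

Lemma PR_E_small a b th r X : 0 <= X <= 1 -> PR (E a b th r) X = 0.
Proof. intros HX. unfold PR. rewrite RInt_E_small by auto. ring. Qed.

Lemma RInt_E_shift a b th r X : 1 <= X -> RInt (E a b th r) 0 X = RInt (E a b th r) 1 X.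
Proof.
  intros HX. rewrite <- (RInt_Chasles _ 0 1 X).
  rewrite RInt_E_small by lra. rewrite plus_R, Rplus_0_l. reflexivity.
  apply (W_sub _ 0 1). apply W_E. lra.
  apply (W_sub _ 1 X). apply W_E. lra.
Qed.

Definition ee a b th r X := if Rle_dec 1 X then - F a b th (S r) 1 / X else 0.

Lemma step_id a b th r X : (1 <= r)%nat -> 0 <= X ->
  PR (E a b th r) X =
    E (a-1) b th (S r) X + ee a b th r X + (- a) * PR (E (a-1) b th (S r)) X
    + b * PR (E (a-1) b (th - PI/2) (S r)) X.
Proof.
  intros Hr HX. destruct (Rlt_le_dec X 1) as [HX1|HX1].
  - rewrite !PR_E_small by lra. unfold E, ee. destruct (Rle_dec 1 X). lra. ring.
  - unfold PR. rewrite !RInt_E_shift by auto.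
    assert (I0 : ex_RInt (E a b th r) 1 X) by (apply W_sub; [apply W_E|lra]).
    assert (I1 : ex_RInt (E (a-1) b th (S r)) 1 X) by (apply W_sub; [apply W_E|lra]).
    assert (I2 : ex_RInt (E (a-1) b (th - PI/2) (S r)) 1 X) by (apply W_sub; [apply W_E|lra]).
    assert (Hib := is_RInt_unique _ _ _ _ (ibp a b th r X Hr HX1)).
    assert (Hlin : RInt (Hf a b th r) 1 X = RInt (E a b th r) 1 X + a * RInt (E (a-1) b th (S r)) 1 X
                    - b * RInt (E (a-1) b (th - PI/2) (S r)) 1 X).
    { transitivity (RInt (fun x => minus (plus (E a b th r x) (scal a (E (a-1) b th (S r) x)))
                                       (scal b (E (a-1) b (th - PI/2) (S r) x))) 1 X).
      reflexivity.
      rewrite (@RInt_minus R_CompleteNormedModule).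
      rewrite (@RInt_plus R_CompleteNormedModule).
      rewrite !(@RInt_scal R_CompleteNormedModule). reflexivity.
      auto. auto. auto. apply (@ex_RInt_scal R_NormedModule). auto.
      apply (@ex_RInt_plus R_NormedModule). auto. apply (@ex_RInt_scal R_NormedModule). auto.
      apply (@ex_RInt_scal R_NormedModule). auto. }
    rewrite Hlin in Hib.
    assert (Hr0 : RInt (E a b th r) 1 X = F a b th (S r) X - F a b th (S r) 1
               - a * RInt (E (a-1) b th (S r)) 1 X + b * RInt (E (a-1) b (th - PI/2) (S r)) 1 X).
    { change (minus (F a b th (S r) X) (F a b th (S r) 1)) with (F a b th (S r) X - F a b th (S r) 1) in Hib. lra. }
    assert (HE : E (a-1) b th (S r) X = F a b th (S r) X / X).
    { unfold E. destruct (Rle_dec 1 X) as [_|Hn]; [|lra]. unfold F, U.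
      rewrite exp_am1 by lra. field. lra. }
    rewrite Hr0, HE. unfold ee. destruct (Rle_dec 1 X) as [_|Hn]; [|lra].
    field. lra.
Qed.


Lemma T0_iter_lin m g h c : W g -> W h -> T0 (Nat.iter m PR g) -> T0 (Nat.iter m PR h) ->
  T0 (Nat.iter m PR (fun x => g x + c * h x)).
Proof.
  intros Hg Hh T1 T2. apply (T0_ext (fun x => Nat.iter m PR g x + c * Nat.iter m PR h x) _ 0).
  intros x Hx. symmetry. apply iter_lin; auto. apply T0_lin; auto.
Qed.

Lemma T0_iter_ext m g h : (forall x, 0 <= x -> g x = h x) -> T0 (Nat.iter m PR g) -> T0 (Nat.iter m PR h).
Proof.
  intros E T. apply (T0_ext (Nat.iter m PR g) _ 0). intros x Hx. apply iter_ext; auto. auto.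
Qed.

Lemma W_ee a b th r : W (ee a b th r).
Proof.
  set (c := - F a b th (S r) 1). split.
  - intros X HX. destruct (Rle_lt_dec X 1).
    + apply (ex_RInt_ext (fun _ => 0)). intros x Hx. rewrite Rmin_left in Hx by lra.
      rewrite Rmax_right in Hx by lra. unfold ee. destruct (Rle_dec 1 x). lra. reflexivity.
      apply ex_RInt_const.
    + apply (ex_RInt_Chasles _ _ 1).
      * apply (ex_RInt_ext (fun _ => 0)). intros x Hx. rewrite Rmin_left in Hx by lra.
        rewrite Rmax_right in Hx by lra. unfold ee. destruct (Rle_dec 1 x). lra. reflexivity.
        apply ex_RInt_const.
      * apply (ex_RInt_ext (fun x => c / x)). intros x Hx. rewrite Rmin_left in Hx by lra.
        rewrite Rmax_right in Hx by lra. unfold ee. destruct (Rle_dec 1 x). reflexivity. lra.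
        apply (@ex_RInt_continuous R_CompleteNormedModule). intros z Hz.
        rewrite Rmin_left in Hz by lra. rewrite Rmax_right in Hz by lra.
        apply (continuous_mult (fun _ => c) (fun x => / x)). apply continuous_const.
        apply continuous_Rinv. lra.
  - intros X HX. exists (Rabs c). intros x Hx. unfold ee. fold c. destruct (Rle_dec 1 x).
    + unfold Rdiv. rewrite Rabs_mult. rewrite <- (Rmult_1_r (Rabs c)) at 2.
      apply Rmult_le_compat_l. apply Rabs_pos. rewrite Rabs_Rinv by lra. rewrite Rabs_right by lra.
      rewrite <- Rinv_1. apply Rinv_le_contravar; lra.
    + rewrite Rabs_R0. apply Rabs_pos.
Qed.

Lemma T0_ee a b th r : T0 (ee a b th r).
Proof.
  set (c := - F a b th (S r) 1). intros eps Heps.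
  exists (Rmax 1 (2 * Rabs c / eps + 1)). intros x Hx.
  assert (H1 : 1 <= x) by (eapply Rle_trans; [apply Rmax_l|exact Hx]).
  assert (H2 : 2 * Rabs c / eps + 1 <= x) by (eapply Rle_trans; [apply Rmax_r|exact Hx]).
  unfold ee. fold c. destruct (Rle_dec 1 x) as [_|Hn]; [|lra].
  unfold Rdiv. rewrite Rabs_mult, Rabs_Rinv, (Rabs_right x) by lra.
  apply (Rmult_lt_reg_r x). lra. rewrite Rmult_assoc, Rinv_l, Rmult_1_r by lra.
  assert (0 <= Rabs c) by apply Rabs_pos.
  assert (2 * Rabs c / eps < x) by lra.
  apply (Rmult_lt_compat_r eps) in H0; [|lra].
  replace (2 * Rabs c / eps * eps) with (2 * Rabs c) in H0 by (field; lra).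
  nra.
Qed.

Lemma T0_E_neg a b th r : a < 0 -> T0 (E a b th r).
Proof.
  intros Ha eps Heps. destruct (q_frac_bound r) as [Mq [HMq HMq']].
  set (L := ln (eps / (Mq + 1)) / a).
  exists (Rmax 1 (exp (L + 1))). intros x Hx.
  assert (H1 : 1 <= x) by (eapply Rle_trans; [apply Rmax_l|exact Hx]).
  assert (H2 : exp (L + 1) <= x) by (eapply Rle_trans; [apply Rmax_r|exact Hx]).
  assert (Hl : L < ln x).
  { apply Rlt_le_trans with (L + 1). lra. rewrite <- (ln_exp (L + 1)). apply ln_le. apply exp_pos. auto. }
  assert (Hal : a * ln x < ln (eps / (Mq + 1))).
  { replace (ln (eps / (Mq + 1))) with (a * L) by (unfold L; field; lra). nra. }
  assert (He : exp (a * ln x) < eps / (Mq + 1)).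
  { rewrite <- (exp_ln (eps / (Mq + 1))). apply exp_increasing. auto.
    apply Rdiv_lt_0_compat; lra. }
  unfold E. destruct (Rle_dec 1 x) as [_|Hn]; [|lra].
  unfold F, U. rewrite !Rabs_mult. rewrite (Rabs_right (exp _)) by (left; apply exp_pos).
  assert (Rabs (cos (b * ln x + th)) <= 1) by (apply Rabs_le; apply COS_bound).
  assert (Hq := HMq' x).
  assert (Hp := exp_pos (a * ln x)).
  assert (exp (a * ln x) * (Mq + 1) < eps).
  { apply (Rmult_lt_compat_r (Mq + 1)) in He; [|lra].
    replace (eps / (Mq + 1) * (Mq + 1)) with eps in He by (field; lra). exact He. }
  assert (Rabs (cos (b * ln x + th)) * Rabs (q r (frac_part x)) <= Mq + 1).
  { assert (0 <= Rabs (cos (b * ln x + th))) by apply Rabs_pos.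
    assert (0 <= Rabs (q r (frac_part x))) by apply Rabs_pos. nra. }
  nra.
Qed.

Lemma claim : forall m a b th r, (1 <= r)%nat -> a < INR m -> T0 (Nat.iter m PR (E a b th r)).
Proof.
  induction m as [|m IH]; intros a b th r Hr Ha.
  - simpl. apply T0_E_neg. simpl in Ha. lra.
  - rewrite iter_S'. rewrite S_INR in Ha.
    set (E1 := E (a-1) b th (S r)). set (E2 := E (a-1) b (th - PI/2) (S r)).
    assert (W1 : W E1) by apply W_E. assert (W2 : W E2) by apply W_E.
    assert (Wee : W (ee a b th r)) by apply W_ee.
    assert (T1 : T0 (Nat.iter m PR E1)) by (apply IH; [lia|lra]).
    assert (T2 : T0 (Nat.iter m PR E2)) by (apply IH; [lia|lra]).
    apply (T0_iter_ext m (fun X => ((E1 X + 1 * ee a b th r X) + (- a) * PR E1 X) + b * PR E2 X)).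
    { intros x Hx. rewrite step_id by auto. fold E1 E2. ring. }
    apply T0_iter_lin.
    + apply W_lin. apply W_lin; auto. apply W_PR; auto.
    + apply W_PR; auto.
    + apply T0_iter_lin. apply W_lin; auto. apply W_PR; auto.
      * apply T0_iter_lin; auto. apply T0_iter; auto. apply T0_ee.
      * rewrite <- iter_S'. simpl. apply T0_cesaro; auto. apply W_iter; auto.
    + rewrite <- iter_S'. simpl. apply T0_cesaro; auto. apply W_iter; auto.
Qed.


Lemma RInt_C (g : R -> C) X :
  ex_RInt (fun t => fst (g t)) 0 X -> ex_RInt (fun t => snd (g t)) 0 X ->
  RInt (V := C_R_CompleteNormedModule) g 0 X = (RInt (fun t => fst (g t)) 0 X, RInt (fun t => snd (g t)) 0 X).
Proof.
  intros H1 H2. apply (@is_RInt_unique C_R_CompleteNormedModule).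
  apply (@is_RInt_fct_extend_pair R_NormedModule R_NormedModule).
  apply (@RInt_correct R_CompleteNormedModule). auto.
  apply (@RInt_correct R_CompleteNormedModule). auto.
Qed.

Lemma iter_C n (h : R -> C) h1 h2 : W h1 -> W h2 ->
  (forall x, 0 <= x -> h x = (h1 x, h2 x)) ->
  forall X, 0 <= X -> Nat.iter n Pavg h X = (Nat.iter n PR h1 X, Nat.iter n PR h2 X).
Proof.
  intros W1 W2 Hh. induction n as [|n IH]; intros X HX. simpl. auto.
  change (Pavg (Nat.iter n Pavg h) X = (PR (Nat.iter n PR h1) X, PR (Nat.iter n PR h2) X)).
  unfold Pavg.
  rewrite (RInt_ext (V := C_R_CompleteNormedModule) _ (fun x => (Nat.iter n PR h1 x, Nat.iter n PR h2 x))).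
  2: { intros x Hx. rewrite Rmin_left in Hx by lra. rewrite Rmax_right in Hx by lra. apply IH. lra. }
  rewrite RInt_C. cbn [fst snd].
  change (fun t => Nat.iter n PR h1 t) with (Nat.iter n PR h1).
  change (fun t => Nat.iter n PR h2 t) with (Nat.iter n PR h2).
  unfold Cmult, RtoC. cbn [fst snd]. f_equal; unfold PR; ring.
  destruct (W_iter n h1 W1) as [Hi _]. apply Hi; auto.
  destruct (W_iter n h2 W2) as [Hi _]. apply Hi; auto.
Qed.

Lemma T0_cinv c : T0 (fun x => c / x).
Proof.
  intros eps Heps.
  exists (Rmax 1 (2 * Rabs c / eps + 1)). intros x Hx.
  assert (H1 : 1 <= x) by (eapply Rle_trans; [apply Rmax_l|exact Hx]).
  assert (H2 : 2 * Rabs c / eps + 1 <= x) by (eapply Rle_trans; [apply Rmax_r|exact Hx]).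
  unfold Rdiv. rewrite Rabs_mult, Rabs_Rinv, (Rabs_right x) by lra.
  apply (Rmult_lt_reg_r x). lra. rewrite Rmult_assoc, Rinv_l, Rmult_1_r by lra.
  assert (0 <= Rabs c) by apply Rabs_pos.
  assert (2 * Rabs c / eps < x) by lra.
  apply (Rmult_lt_compat_r eps) in H0; [|lra].
  replace (2 * Rabs c / eps * eps) with (2 * Rabs c) in H0 by (field; lra).
  nra.
Qed.

Lemma T0_F a b th r m : (1 <= r)%nat -> 0 <= a -> a < INR (S m) ->
  T0 (Nat.iter (S m) PR (F a b th r)).
Proof.
  intros Hr Ha Ham.
  set (D := fun x => F a b th r x + (-1) * E a b th r x).
  assert (WD : W D) by (apply W_lin; [apply W_F; auto | apply W_E]).
  apply (T0_iter_ext _ (fun x => E a b th r x + 1 * D x)).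
  { intros x _. unfold D. ring. }
  apply T0_iter_lin. apply W_E. auto.
  - apply claim; auto.
  - rewrite iter_S'. apply T0_iter. apply W_PR; auto.
    apply (T0_ext (fun x => RInt D 0 1 / x) _ 1).
    + intros x Hx. unfold PR. rewrite <- (RInt_Chasles D 0 1 x).
      rewrite (RInt_ext D (fun _ => 0) 1 x).
      rewrite RInt_const. unfold Rdiv. rewrite plus_R. unfold scal; simpl. unfold mult; simpl. ring.
      intros y Hy. rewrite Rmin_left in Hy by lra. rewrite Rmax_right in Hy by lra.
      unfold D, E. destruct (Rle_dec 1 y). exact (ltac:(ring) : F a b th r y + -1 * F a b th r y = 0). lra.
      apply (W_sub D 0 1); auto; lra. apply (W_sub D 1 x); auto; lra.
    + apply T0_cinv.
Qed.

Theorem mainTheorem2 (delta : C) (r : nat) :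
  delta <> RtoC 0 -> 0 <= Re delta -> (1 <= r)%nat ->
  filterlim
    (Nat.iter (S (Z.to_nat (Int_part (Re delta)))) Pavg (fdq delta r))
    (Rbar_locally p_infty) (locally (RtoC 0)).
Proof.
  intros _ Ha Hr. destruct delta as [a b]. unfold Re in Ha. simpl in Ha. unfold Re. simpl.
  set (m := Z.to_nat (Int_part a)).
  assert (Ham : a < INR (S m)).
  { destruct (base_Int_part a) as [H1 H2].
    assert (Hk : (0 <= Int_part a)%Z).
    { assert (IZR (Int_part a) > -1) by lra.
      destruct (Z_lt_le_dec (Int_part a) 0) as [Hl|Hl]; [|exact Hl].
      assert (Hm : (Int_part a <= -1)%Z) by lia. apply IZR_le in Hm. lra. }
    rewrite S_INR. unfold m. rewrite INR_IZR_INZ, Z2Nat.id by auto. lra. }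
  set (f1 := F a b 0 r). set (f2 := F a b (0 - PI/2) r).
  assert (W1 : W f1) by (apply W_F; auto). assert (W2 : W f2) by (apply W_F; auto).
  assert (E12 : forall x, 0 <= x -> fdq (a, b) r x = (f1 x, f2 x)).
  { intros x _. unfold fdq, cpow, f1, f2, F, U, Cmult, RtoC. simpl.
    replace (b * ln x + (0 - PI / 2)) with (b * ln x - PI/2) by ring.
    rewrite cos_mPI2. rewrite Rplus_0_r. f_equal; ring. }
  assert (T1 := T0_F a b 0 r m Hr Ha Ham). assert (T2 := T0_F a b (0 - PI/2) r m Hr Ha Ham).
  fold f1 in T1. fold f2 in T2.
  apply filterlim_locally. intros eps.
  destruct (T1 eps (cond_pos eps)) as [A1 HA1]. destruct (T2 eps (cond_pos eps)) as [A2 HA2].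
  exists (Rmax 0 (Rmax A1 A2)). intros x Hx.
  assert (H0 : 0 <= x) by (pose proof (Rmax_l 0 (Rmax A1 A2)); lra).
  assert (Hx1 : A1 <= x) by (pose proof (Rmax_r 0 (Rmax A1 A2)); pose proof (Rmax_l A1 A2); lra).
  assert (Hx2 : A2 <= x) by (pose proof (Rmax_r 0 (Rmax A1 A2)); pose proof (Rmax_r A1 A2); lra).
  change (ball (RtoC 0) eps (Nat.iter (S m) Pavg (fdq (a, b) r) x)).
  rewrite (iter_C (S m) _ f1 f2 W1 W2 E12 x H0).
  split; unfold ball; simpl; unfold AbsRing_ball, abs, minus, plus, opp; simpl;
    rewrite Ropp_0, Rplus_0_r.
  apply HA1; auto. apply HA2; auto.
Qed.
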